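(* Let $\kappa\ge\omega_0$ be a cardinal and let $(X,\tau)$ be a Lindelöf $\kappa$-exclusive space. Then $X$ is a D-space.
   Context: A space is Lindelöf if every open cover has a countable subcover (no separation axiom assumed). For a cardinal $\kappa$, $(X,\tau)$ is $\kappa$-exclusive if for every $x\in X$, every open neighborhood $U$ of $x$, and every $A\subseteq U$ with $x\notin A$ and $|A|\le\kappa$, there is an open neighborhood $V$ of $x$ with $V\subseteq U\setminus A$. An open neighborhood assignment is a function $N:X\to\tau$ with $x\in N(x)$ for all $x$. $X$ is a D-space if for every open neighborhood assignment $N$ there is a closed discrete $D\subseteq X$ with $\bigcup_{d\in D}N(d)=X$. *)

(* Defs.v *)
From HB Require Import structures.
From mathcomp Require Import all_boot all_order.
From mathcomp Require Import boolp classical_sets functions cardinality topology.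
Set Implicit Arguments. Unset Strict Implicit. Unset Printing Implicit Defensive.
Local Open Scope classical_set_scope.
Local Open Scope card_scope.

Definition lindelof (X : topologicalType) : Prop :=
  forall C : set (set X),
    (forall U, C U -> open U) -> \bigcup_(U in C) U = setT ->
    exists C' : set (set X),
      [/\ C' `<=` C, countable C' & \bigcup_(U in C') U = setT].

(* The cardinal kappa is represented as the cardinality of a type K;
   |A| <= kappa is  A #<= [set: K]. *)
Definition kappa_exclusive (K : Type) (X : topologicalType) : Prop :=
  forall (x : X) (U A : set X), open U -> U x -> A `<=` U -> ~ A x ->
    A #<= [set: K] ->
    exists V : set X, [/\ open V, V x & V `<=` U `\` A].

Definition discrete_subset (X : topologicalType) (D : set X) : Prop :=
  forall d, D d -> exists U : set X, [/\ open U, U d & U `&` D = [set d]].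

Definition closed_discrete (X : topologicalType) (D : set X) : Prop :=
  closed D /\ discrete_subset D.

Definition D_space (X : topologicalType) : Prop :=
  forall N : X -> set X, (forall x, open (N x) /\ N x x) ->
    exists D : set X, closed_discrete D /\ \bigcup_(d in D) N d = setT.

(* Main.v *)
Require Import Defs.
From mathcomp Require Import all_boot all_order.
From mathcomp Require Import boolp classical_sets functions cardinality topology.
Local Open Scope classical_set_scope.
Local Open Scope card_scope.

Theorem mainTheorem5 (K : Type) (X : topologicalType) :
  [set: nat] #<= [set: K] -> lindelof X -> kappa_exclusive K X -> D_space X.
Proof.
move=> hK hL hE N hN.
have cK : forall A : set X, countable A -> A #<= [set: K].
  by move=> A cA; apply: card_le_trans cA hK.
have cd : forall D : set X, countable D -> closed_discrete D.
  move=> D cD; split.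
  - move=> x /= clx; apply/not_notP => nDx.
    have [V [oV Vx sV]] := hE x setT D openT I (fun _ _ => I) nDx (cK _ cD).
    have /clx [y [Dy Vy]] : nbhs x V by apply: open_nbhs_nbhs.
    by have [_ ] := sV y Vy.
  - move=> d Dd.
    have cD' : countable (D `\ d) by apply: sub_countable cD; apply: subset_card_le => y [].
    have [V [oV Vd sV]] := hE d setT (D `\ d) openT I (fun _ _ => I)
      (fun h => h.2 erefl) (cK _ cD').
    exists V; split => //; apply/seteqP; split => y.
    + move=> [Vy Dy]; apply/not_notP => nyd.
      by have [_ ] := sV y Vy; apply; split.
    + by move=> /= ->; split.
have [[x0 _]|nX] := pselect (exists x : X, True); last first.
  exists set0; split; first by apply: cd; exact: countable0.
  by apply/seteqP; split => // x _; case: nX; exists x.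
have oC : forall U, range N U -> open U by move=> U [x _ <-]; exact: (hN x).1.
have cC : \bigcup_(U in range N) U = setT.
  apply/seteqP; split => // x _; exists (N x); [by exists x | exact: (hN x).2].
have [C' [sC' cC' cov]] := hL (range N) oC cC.
pose g U := xget x0 (fun y => N y = U).
exists (g @` C'); split.
  by apply: cd; apply: card_le_trans (card_image_le _ _) cC'.
apply/seteqP; split => // x _.
have : (\bigcup_(U in C') U) x by rewrite cov.
case=> U C'U Ux; exists (g U); first by exists U.
have [y _ e] := sC' U C'U.
by rewrite /g (xgetPex x0 (P := fun y => N y = U)) //; exists y.
Qed.
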